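(* Let $\mathcal{A}$ be a graded algebra and $(C,d)$ a differential graded $\mathcal{A}$-module (an $\mathcal{A}$-differential space, $\mathcal{A}$ acting compatibly with $d$). Suppose $H_1\colon C\to C$ is an $\mathcal{A}$-equivariant homotopy operator between the identity and some $\mathcal{A}$-equivariant projection $\Pi_1\colon C\to C$ onto a differential subspace $C'\subset C$, i.e. $[d,H_1]=I-\Pi_1$, and suppose that a cochain map $\Pi\colon C\to C$ is another $\mathcal{A}$-equivariant projection onto $C'$. Then $H=(I-\Pi_1-\Pi)H_1(I-\Pi_1-\Pi)$ is an $\mathcal{A}$-equivariant homotopy between $I$ and $\Pi$, i.e. $[d,H]=I-\Pi$.
   Context: $[d,H]=dH+Hd$ for an odd operator $H$ (graded commutator). $\mathcal{A}$ carries the trivial differential. *)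

(* Defs.v *)
From HB Require Import structures.
From mathcomp Require Import all_boot all_order all_algebra.
Set Implicit Arguments. Unset Strict Implicit. Unset Printing Implicit Defensive.
Import GRing.Theory.
Local Open Scope ring_scope.

Section GradedDefs.
Variable R : fieldType.

Definition gsign (m : int) : R := (-1) ^+ absz m.

Definition subspace (V : lmodType R) (S : pred V) : Prop :=
  0 \in S /\ (forall (k : R) u v, u \in S -> v \in S -> k *: u + v \in S).

(* V = (+)_n G n  (internal direct sum of subspaces indexed by int) *)
Definition grading (V : lmodType R) (G : int -> pred V) : Prop :=
  [/\ forall n, subspace (G n),
      forall v, exists (s : seq int) (f : int -> V),
        (forall n, f n \in G n) /\ v = \sum_(n <- s) f n &
      forall (s : seq int) (f : int -> V), uniq s -> (forall n, f n \in G n) ->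
        \sum_(n <- s) f n = 0 -> forall n, n \in s -> f n = 0].

Definition linmap (V : lmodType R) (f : V -> V) : Prop :=
  forall (k : R) u v, f (k *: u + v) = k *: f u + f v.

Definition graded_algebra (A : algType R) (GA : int -> pred A) : Prop :=
  [/\ grading GA, 1 \in GA 0 &
      forall m n a b, a \in GA m -> b \in GA n -> a * b \in GA (m + n)].

(* differential graded A-module (A with trivial differential); d has degree +1 *)
Record dg_module (A : algType R) (GA : int -> pred A) (C : lmodType R)
    (GC : int -> pred C) (act : A -> C -> C) (d : C -> C) : Prop := DGModule {
  dgm_grading : grading GC;
  dgm_d_lin : linmap d;
  dgm_d_deg : forall n c, c \in GC n -> d c \in GC (n + 1);
  dgm_dd : forall c, d (d c) = 0;
  dgm_act_lin : forall a, linmap (act a);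
  dgm_act_linl : forall (k : R) a b c, act (k *: a + b) c = k *: act a c + act b c;
  dgm_act1 : forall c, act 1 c = c;
  dgm_actM : forall a b c, act (a * b) c = act a (act b c);
  dgm_act_deg : forall m n a c, a \in GA m -> c \in GC n -> act a c \in GC (m + n);
  dgm_d_act : forall m a c, a \in GA m -> d (act a c) = gsign m *: act a (d c)
}.

Definition has_degree (C : lmodType R) (GC : int -> pred C) (k : int) (f : C -> C) :=
  forall n c, c \in GC n -> f c \in GC (n + k).

Definition equivariant (A : algType R) (GA : int -> pred A) (C : lmodType R)
    (act : A -> C -> C) (p : int) (f : C -> C) :=
  forall m a c, a \in GA m -> f (act a c) = gsign (m * p) *: act a (f c).

Definition projection_onto (C : lmodType R) (f : C -> C) (C' : pred C) : Prop :=
  [/\ linmap f, forall c, f c \in C' & forall c, c \in C' -> f c = c].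

(* [d,H] = dH + Hd = I - P *)
Definition homotopy_between (C : lmodType R) (d H P : C -> C) : Prop :=
  forall c, d (H c) + H (d c) = c - P c.

End GradedDefs.

(* Main.v *)
Require Import Defs.
From HB Require Import structures.
From mathcomp Require Import all_boot all_order all_algebra.
Local Open Scope ring_scope.
Import GRing.Theory.
Set Implicit Arguments. Unset Strict Implicit.

Section Aux.
Variable R : fieldType.
Variable V : lmodType R.
Implicit Types (f : V -> V) (S : pred V).

Lemma lm0 f : linmap f -> f 0 = 0.
Proof. move=> hf; have := hf 1 0 0; rewrite !scale1r addr0 => h.
by apply: (@addrI _ (f 0)); rewrite addr0 -h. Qed.
Lemma lmD f u v : linmap f -> f (u + v) = f u + f v.
Proof. by move=> hf; have := hf 1 u v; rewrite !scale1r. Qed.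
Lemma lmZ f k u : linmap f -> f (k *: u) = k *: f u.
Proof. by move=> hf; have := hf k u 0; rewrite !addr0 (lm0 hf) addr0. Qed.
Lemma lmN f u : linmap f -> f (- u) = - f u.
Proof. by move=> hf; rewrite -scaleN1r lmZ // scaleN1r. Qed.
Lemma lmB f u v : linmap f -> f (u - v) = f u - f v.
Proof. by move=> hf; rewrite lmD // lmN. Qed.

Lemma lmSub f g : linmap f -> linmap g -> linmap (fun c => f c - g c).
Proof. by move=> hf hg k u v; rewrite hf hg opprD addrACA scalerBr. Qed.
Lemma lmId : linmap (fun c : V => c). Proof. by []. Qed.

Lemma lmComp f g : linmap f -> linmap g -> linmap (fun c => f (g c)).
Proof. by move=> hf hg k u v; rewrite hg hf. Qed.

Lemma sD S u v : subspace S -> u \in S -> v \in S -> u + v \in S.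
Proof. by move=> [_ h] hu hv; have := h 1 u v hu hv; rewrite scale1r. Qed.
Lemma sZ S k u : subspace S -> u \in S -> k *: u \in S.
Proof. by move=> [h0 h] hu; have := h k u 0 hu h0; rewrite addr0. Qed.
Lemma sB S u v : subspace S -> u \in S -> v \in S -> u - v \in S.
Proof. by move=> hS hu hv; rewrite -scaleN1r; apply: sD => //; apply: sZ. Qed.
End Aux.

Theorem lemma5p6 (R : fieldType) (A : algType R) (GA : int -> pred A)
    (C : lmodType R) (GC : int -> pred C) (act : A -> C -> C) (d : C -> C)
    (C' : pred C) (H1 Pi1 Pi : C -> C) :
  graded_algebra GA -> dg_module GA GC act d ->
  subspace C' -> (forall c, c \in C' -> d c \in C') ->
  linmap H1 -> has_degree GC (-1) H1 -> equivariant GA act (-1) H1 ->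
  projection_onto Pi1 C' -> has_degree GC 0 Pi1 -> equivariant GA act 0 Pi1 ->
  homotopy_between d H1 Pi1 ->
  projection_onto Pi C' -> has_degree GC 0 Pi -> equivariant GA act 0 Pi ->
  (forall c, d (Pi c) = Pi (d c)) ->
  let H := fun c => let x := c - Pi1 c - Pi c in
                    let y := H1 x in y - Pi1 y - Pi y in
  [/\ linmap H, has_degree GC (-1) H, equivariant GA act (-1) H &
      homotopy_between d H Pi].
Proof.
move=> _ dgm _ _ lH1 degH1 eqH1 [lP inP fixP] degP eqP' hom [lQ inQ fixQ]
  degQ eqQ dQ H.
have ld := dgm_d_lin dgm.
have [gsub _ _] := dgm_grading dgm.
pose T c := c - Pi1 c - Pi c.
have lT : linmap T.
  by apply: lmSub => //; apply: lmSub => //; apply: lmId.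
have HT c : H c = T (H1 (T c)) by [].
have PQ c : Pi1 (Pi c) = Pi c by apply: fixP.
have QP c : Pi (Pi1 c) = Pi1 c by apply: fixQ.
have PP c : Pi1 (Pi1 c) = Pi1 c by apply: fixP.
have QQ c : Pi (Pi c) = Pi c by apply: fixQ.
have dd := dgm_dd dgm.
have dP c : d (Pi1 c) = Pi1 (d c).
  have h1 := hom c; have h2 := hom (d c).
  have := congr1 d h1; rewrite lmD // dd add0r (lmB _ _ ld) => h3.
  move: h2; rewrite dd lm0 // addr0 h3 => /addrI /oppr_inj //.
have dT c : d (T c) = T (d c) by rewrite /T !(lmB _ _ ld) dP dQ.
have PT c : Pi1 (T c) = - Pi c by rewrite /T !(lmB _ _ lP) PP PQ subrr sub0r.
have TQ c : T (Pi c) = - Pi c by rewrite /T PQ QQ subrr sub0r.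
have TT c : T (T c) = c.
  rewrite {1}/T PT (lmB _ _ lQ) (lmB _ _ lQ) QP QQ /T.
  by rewrite opprK subrK [Pi c - _ - _]addrAC subrr add0r opprK subrK.
have degT n c : c \in GC n -> T c \in GC n.
  move=> hc; have := degP n c hc; have := degQ n c hc; rewrite addr0 => h1 h2.
  by rewrite /T; apply: sB => //; apply: sB.
have s0 m : gsign R (m * 0) = 1 by rewrite mulr0 /gsign expr0.
have eqT m a c : a \in GA m -> T (act a c) = act a (T c).
  move=> ha; rewrite /T (eqP' m) // (eqQ m) // s0 !scale1r.
  by rewrite !(lmB _ _ (dgm_act_lin dgm a)).
split.
- change (linmap (fun c => T (H1 (T c)))).
  by apply: lmComp => //; apply: lmComp.
- move=> n c hc; rewrite HT; apply: (degT); apply: (degH1); exact: (degT).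
- move=> m a c ha; rewrite !HT (eqT m) // (eqH1 m) //.
  by rewrite (lmZ _ _ lT) (eqT m).
- move=> c; rewrite !HT dT -(dT c) -(lmD _ _ lT) hom PT opprK (lmD _ _ lT) TT TQ.
  by [].
Qed.
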